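(* Suppose a Tychonoff space $X$ with $nw(X)\leq\mathfrak c$ contains a dense subspace which is a Lindelöf $\Sigma$-space. Then $|C(X)|\leq\mathfrak c$, $w(X)\leq\mathfrak c$, and the Stone–Čech compactification satisfies $w(\beta X)\leq\mathfrak c$.
   Context: $C(X)$ is the set of continuous real-valued functions on $X$; $nw$ network weight, $w$ weight, $\mathfrak c=2^\omega$. The Nagami number $Nag(Y)$ of a Tychonoff space $Y$ is the minimal cardinality of a family $\mathcal F$ of closed subsets of $\beta Y$ such that for every $y\in Y$ and $z\in\beta Y\setminus Y$ there is $F\in\mathcal F$ with $y\in F$, $z\notin F$; $Y$ is a Lindelöf $\Sigma$-space if $Nag(Y)\leq\omega$. *)

(* Defs.v *)
From Stdlib Require Import Reals List.
Open Scope R_scope.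

Record Top := {
  pt :> Type;
  isopen : (pt -> Prop) -> Prop;
  open_full : isopen (fun _ => True);
  open_inter : forall U V, isopen U -> isopen V -> isopen (fun x => U x /\ V x);
  open_union : forall F : (pt -> Prop) -> Prop,
      (forall U, F U -> isopen U) -> isopen (fun x => exists U, F U /\ U x)
}.

Definition isclosed (X : Top) (F : X -> Prop) : Prop := isopen X (fun x => ~ F x).

Definition card_le_c (I : Type) : Prop :=
  exists f : I -> (nat -> bool), forall a b, f a = f b -> a = b.
Definition countable (I : Type) : Prop :=
  exists f : I -> nat, forall a b, f a = f b -> a = b.

Definition continuous (X Y : Top) (f : X -> Y) : Prop :=
  forall V, isopen Y V -> isopen X (fun x => V (f x)).

Definition continuous_R (X : Top) (f : X -> R) : Prop :=
  forall x eps, 0 < eps ->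
    exists U, isopen X U /\ U x /\ forall y, U y -> Rabs (f y - f x) < eps.

Definition CX (X : Top) : Type := { f : X -> R | continuous_R X f }.

Definition bounded (X : Top) (f : X -> R) : Prop :=
  exists M, forall x, Rabs (f x) <= M.

Definition T1 (X : Top) : Prop :=
  forall x y : X, x <> y -> exists U, isopen X U /\ U x /\ ~ U y.
Definition hausdorff (X : Top) : Prop :=
  forall x y : X, x <> y -> exists U V, isopen X U /\ isopen X V /\ U x /\ V y /\
    forall z, ~ (U z /\ V z).
Definition completely_regular (X : Top) : Prop :=
  forall (F : X -> Prop) (x : X), isclosed X F -> ~ F x ->
    exists f : X -> R, continuous_R X f /\ f x = 0 /\
      (forall y, F y -> f y = 1) /\ (forall y, 0 <= f y <= 1).
Definition tychonoff (X : Top) : Prop := T1 X /\ completely_regular X.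

Definition compact (X : Top) : Prop :=
  forall F : (X -> Prop) -> Prop,
    (forall U, F U -> isopen X U) ->
    (forall x, exists U, F U /\ U x) ->
    exists l : list (X -> Prop), (forall U, In U l -> F U) /\
      (forall x, exists U, In U l /\ U x).

Definition nw_le_c (X : Top) : Prop :=
  exists (I : Type) (N : I -> X -> Prop), card_le_c I /\
    forall U x, isopen X U -> U x -> exists i, N i x /\ forall y, N i y -> U y.
Definition w_le_c (X : Top) : Prop :=
  exists (I : Type) (B : I -> X -> Prop), card_le_c I /\
    (forall i, isopen X (B i)) /\
    forall U x, isopen X U -> U x -> exists i, B i x /\ forall y, B i y -> U y.

Definition dense (X : Top) (D : X -> Prop) : Prop :=
  forall U, isopen X U -> (exists x, U x) -> exists x, U x /\ D x.

Section Sub.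
Variables (X : Top) (D : X -> Prop).
Definition sub_open (W : {x | D x} -> Prop) : Prop :=
  exists U, isopen X U /\ forall y, W y <-> U (proj1_sig y).
Lemma sub_open_full : sub_open (fun _ => True).
Proof. exists (fun _ => True); split; [apply open_full | tauto]. Qed.
Lemma sub_open_inter : forall U V, sub_open U -> sub_open V ->
  sub_open (fun x => U x /\ V x).
Proof.
  intros U V [U' [HU EU]] [V' [HV EV]].
  exists (fun x => U' x /\ V' x); split; [apply open_inter; auto|].
  intro y; rewrite EU, EV; tauto.
Qed.
Lemma sub_open_union : forall F : ({x | D x} -> Prop) -> Prop,
  (forall U, F U -> sub_open U) -> sub_open (fun x => exists U, F U /\ U x).
Proof.
  intros F HF.
  exists (fun x => exists U, (isopen X U /\ exists W, F W /\
            forall y, W y <-> U (proj1_sig y)) /\ U x).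
  split.
  - apply open_union; intros U [HU _]; exact HU.
  - intro y; split.
    + intros [W [FW Wy]]. destruct (HF W FW) as [U [HU EU]].
      exists U; split; [split; [exact HU | exists W; auto] | apply EU; exact Wy].
    + intros [U [[HU [W [FW EW]]] Uy]]. exists W; split; [exact FW | apply EW; exact Uy].
Qed.
Definition subspace : Top :=
  {| pt := {x | D x}; isopen := sub_open; open_full := sub_open_full;
     open_inter := sub_open_inter; open_union := sub_open_union |}.
End Sub.

(** It is the
    Stone-Cech compactification if moreover every bounded continuous real
    function on X extends continuously over K (Engelking, Thm 3.6.1/Cor 3.6.3). *)
Definition embedding (X K : Top) (e : X -> K) : Prop :=
  continuous X K e /\ (forall a b, e a = e b -> a = b) /\
  forall U, isopen X U -> exists V, isopen K V /\ forall x, U x <-> V (e x).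

Definition compactification (X K : Top) (e : X -> K) : Prop :=
  compact K /\ hausdorff K /\ embedding X K e /\ dense K (fun z => exists x, e x = z).

Definition stone_cech (X K : Top) (e : X -> K) : Prop :=
  compactification X K e /\
  forall f : X -> R, continuous_R X f -> bounded X f ->
    exists g : K -> R, continuous_R K g /\ forall x, g (e x) = f x.

(** Nag(Y) <= omega, computed in a Stone-Cech compactification (K, e) of Y. *)
Definition nagami_countable_in (Y K : Top) (e : Y -> K) : Prop :=
  exists (I : Type) (F : I -> K -> Prop), countable I /\
    (forall i, isclosed K (F i)) /\
    forall (y : Y) (z : K), ~ (exists y', e y' = z) -> exists i, F i (e y) /\ ~ F i z.

Definition lindelof_sigma (Y : Top) : Prop :=
  exists (K : Top) (e : Y -> K), stone_cech Y K e /\ nagami_countable_in Y K e.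

(* Main.v *)
Require Import Defs.
From Stdlib Require Import Reals List Lra Lia ZArith Classical ClassicalEpsilon
  FunctionalExtensionality PropExtensionality ProofIrrelevance Cantor.
Open Scope R_scope.

Lemma card_inj (A B : Type) (g : A -> B) :
  (forall a b, g a = g b -> a = b) -> card_le_c B -> card_le_c A.
Proof. intros Hg [f Hf]. exists (fun a => f (g a)). intros a b H. auto. Qed.

Lemma count_inj (A B : Type) (g : A -> B) :
  (forall a b, g a = g b -> a = b) -> countable B -> countable A.
Proof. intros Hg [f Hf]. exists (fun a => f (g a)). intros a b H. auto. Qed.

Lemma countable_nat : countable nat.
Proof. exists (fun n => n). auto. Qed.

Lemma countable_prod (A B : Type) : countable A -> countable B -> countable (A * B).
Proof.
  intros [f Hf] [g Hg]. exists (fun p => to_nat (f (fst p), g (snd p))).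
  intros [a1 b1] [a2 b2] H. cbn [fst snd] in H.
  apply (f_equal of_nat) in H. rewrite !cancel_of_to in H. inversion H.
  f_equal; auto.
Qed.

Lemma countable_list (A : Type) : countable A -> countable (list A).
Proof.
  intros [f Hf].
  exists (fix c l := match l with nil => 0%nat | cons a l' => S (to_nat (f a, c l')) end).
  induction a as [|x l IH]; destruct b as [|y l']; intros H; try discriminate; auto.
  apply (f_equal (fun n => of_nat (pred n))) in H. cbn beta iota in H.
  cbn [Init.Nat.pred] in H.
  rewrite !cancel_of_to in H. inversion H. f_equal; auto.
Qed.

Lemma countable_Z : countable Z.
Proof.
  exists (fun z => match z with Z0 => 0%nat | Zpos p => (2 * Pos.to_nat p)%nat
                  | Zneg p => S (2 * Pos.to_nat p)%nat end).
  intros [|p|p] [|q|q]; intros H; try lia; f_equal; try lia.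
Qed.

Lemma card_nat_bool : card_le_c (nat -> bool).
Proof. exists (fun f => f). auto. Qed.

Lemma card_of_countable (A : Type) : countable A -> card_le_c A.
Proof.
  intros [f Hf]. exists (fun a n => Nat.eqb n (f a)).
  intros a b H. apply Hf. assert (E := f_equal (fun h => h (f a)) H). simpl in E.
  rewrite Nat.eqb_refl in E. symmetry in E. apply Nat.eqb_eq in E. auto.
Qed.

Lemma card_prod (A B : Type) : card_le_c A -> card_le_c B -> card_le_c (A * B).
Proof.
  intros [f Hf] [g Hg].
  exists (fun p n => let (x, y) := of_nat n in if Nat.eqb x 0 then f (fst p) y else g (snd p) y).
  intros [a1 b1] [a2 b2] H. cbn [fst snd] in H. f_equal.
  - apply Hf. apply functional_extensionality. intro y.
    assert (E := f_equal (fun h => h (to_nat (0%nat, y))) H). cbv beta in E.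
    rewrite cancel_of_to in E. simpl in E. exact E.
  - apply Hg. apply functional_extensionality. intro y.
    assert (E := f_equal (fun h => h (to_nat (1%nat, y))) H). cbv beta in E.
    rewrite cancel_of_to in E. simpl in E. exact E.
Qed.

Lemma card_option (B : Type) : card_le_c B -> card_le_c (option B).
Proof.
  intros [f Hf].
  exists (fun o n => match o with None => false | Some b =>
            match n with O => true | S m => f b m end end).
  intros [a|] [b|] H; auto.
  - f_equal. apply Hf. apply functional_extensionality. intro m.
    exact (f_equal (fun h => h (S m)) H).
  - exfalso. assert (E := f_equal (fun h => h O) H). discriminate.
  - exfalso. assert (E := f_equal (fun h => h O) H). discriminate.
Qed.

Lemma card_nat_fun (B : Type) : card_le_c B -> card_le_c (nat -> B).
Proof.
  intros [f Hf].
  exists (fun F n => let (x, y) := of_nat n in f (F x) y).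
  intros F G H. apply functional_extensionality. intro x. apply Hf.
  apply functional_extensionality. intro y.
  assert (E := f_equal (fun h => h (to_nat (x, y))) H). cbv beta in E.
  rewrite cancel_of_to in E. exact E.
Qed.

Lemma nth_error_inj (A : Type) (l1 l2 : list A) :
  (forall n, nth_error l1 n = nth_error l2 n) -> l1 = l2.
Proof.
  revert l2; induction l1 as [|a l IH]; destruct l2 as [|b l']; intros H; auto.
  - specialize (H O). discriminate.
  - specialize (H O). discriminate.
  - assert (H0 := H O). simpl in H0. inversion H0. f_equal. apply IH.
    intro n. exact (H (S n)).
Qed.

Lemma card_list (B : Type) : card_le_c B -> card_le_c (list B).
Proof.
  intros HB. apply (card_inj _ _ (fun l n => nth_error l n)).
  - intros a b H. apply nth_error_inj. intro n. exact (f_equal (fun h => h n) H).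
  - apply card_nat_fun. apply card_option. exact HB.
Qed.

Lemma card_fun (A B : Type) : countable A -> card_le_c B -> card_le_c (A -> B).
Proof.
  intros [ia Hia] HB.
  assert (inv : forall n : nat, option A).
  { intro n. destruct (excluded_middle_informative (exists a, ia a = n)) as [e|_].
    - apply constructive_indefinite_description in e. exact (Some (proj1_sig e)).
    - exact None. }
  pose (inv' := fun n : nat =>
     match excluded_middle_informative (exists a, ia a = n) with
     | left e => Some (proj1_sig (constructive_indefinite_description _ e))
     | right _ => None end).
  assert (Hinv : forall a, inv' (ia a) = Some a).
  { intro a. unfold inv'. destruct (excluded_middle_informative _) as [e|n].
    - destruct (constructive_indefinite_description _ e) as [b Hb]. simpl. f_equal. auto.
    - exfalso. apply n. eauto. }
  apply (card_inj _ _ (fun F n => option_map F (inv' n))).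
  - intros F G H. apply functional_extensionality. intro a.
    assert (E := f_equal (fun h => h (ia a)) H). simpl in E. rewrite Hinv in E.
    simpl in E. inversion E. auto.
  - apply card_nat_fun. apply card_option. exact HB.
Qed.
Lemma open_ext (X : Top) (U V : X -> Prop) :
  (forall x, U x <-> V x) -> isopen X U -> isopen X V.
Proof.
  intros H HU. replace V with U; auto.
  apply functional_extensionality; intro x. apply propositional_extensionality. auto.
Qed.

Lemma open_or (X : Top) (U V : X -> Prop) :
  isopen X U -> isopen X V -> isopen X (fun x => U x \/ V x).
Proof.
  intros HU HV.
  apply (open_ext X (fun x => exists W, (W = U \/ W = V) /\ W x)).
  - intro x; split.
    + intros [W [[->| ->] Hx]]; auto.
    + intros [Hx|Hx]; eauto.
  - apply open_union. intros W [->| ->]; auto.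
Qed.

Lemma open_empty (X : Top) : isopen X (fun _ => False).
Proof.
  apply (open_ext X (fun x => exists W, False /\ W x)).
  - intro x; split; [intros [W [[] _]] | intros []].
  - apply open_union. intros W [].
Qed.

Lemma open_ex (X : Top) (A : Type) (P : A -> X -> Prop) :
  (forall a, isopen X (P a)) -> isopen X (fun x => exists a, P a x).
Proof.
  intros H.
  apply (open_ext X (fun x => exists W, (exists a, W = P a) /\ W x)).
  - intro x; split.
    + intros [W [[a ->] Hx]]; eauto.
    + intros [a Hx]; eauto.
  - apply open_union. intros W [a ->]; auto.
Qed.

Lemma open_list_ex (X : Top) (A : Type) (l : list A) (P : A -> X -> Prop) :
  (forall a, In a l -> isopen X (P a)) -> isopen X (fun x => exists a, In a l /\ P a x).
Proof.
  intros H.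
  apply (open_ext X (fun x => exists a : {a | In a l}, P (proj1_sig a) x)).
  - intro x; split.
    + intros [[a Ha] Hx]; eauto.
    + intros [a [Ha Hx]]. exists (exist _ a Ha); auto.
  - apply open_ex. intros [a Ha]; auto.
Qed.

Lemma open_list_all (X : Top) (A : Type) (l : list A) (P : A -> X -> Prop) :
  (forall a, In a l -> isopen X (P a)) -> isopen X (fun x => forall a, In a l -> P a x).
Proof.
  induction l as [|b l IH]; intros H.
  - apply (open_ext X (fun _ => True)); [intro x; split; [intros _ a []|auto] | apply open_full].
  - apply (open_ext X (fun x => P b x /\ forall a, In a l -> P a x)).
    + intro x; split.
      * intros [H1 H2] a [<-|Ha]; auto.
      * intros H1; split; [apply H1; left; auto | intros a Ha; apply H1; right; auto].
    + apply open_inter; [apply H; left; auto | apply IH; intros a Ha; apply H; right; auto].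
Qed.

Lemma open_lt (X : Top) (f : X -> R) (c : R) :
  continuous_R X f -> isopen X (fun x => f x < c).
Proof.
  intros Hf.
  apply (open_ext X (fun x => exists W, (isopen X W /\ forall y, W y -> f y < c) /\ W x)).
  - intro x; split.
    + intros [W [[_ HW] Hx]]; auto.
    + intros Hx. destruct (Hf x (c - f x)) as [U [HU [Ux HUy]]]; [lra|].
      exists U; split; [split; auto|auto].
      intros y Uy. specialize (HUy y Uy). apply Rabs_def2 in HUy. lra.
  - apply open_union. intros W [HW _]; auto.
Qed.

Lemma open_gt (X : Top) (f : X -> R) (c : R) :
  continuous_R X f -> isopen X (fun x => c < f x).
Proof.
  intros Hf.
  apply (open_ext X (fun x => exists W, (isopen X W /\ forall y, W y -> c < f y) /\ W x)).
  - intro x; split.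
    + intros [W [[_ HW] Hx]]; auto.
    + intros Hx. destruct (Hf x (f x - c)) as [U [HU [Ux HUy]]]; [lra|].
      exists U; split; [split; auto|auto].
      intros y Uy. specialize (HUy y Uy). apply Rabs_def2 in HUy. lra.
  - apply open_union. intros W [HW _]; auto.
Qed.

Lemma cont_comp (X Y : Top) (e : X -> Y) (g : Y -> R) :
  continuous X Y e -> continuous_R Y g -> continuous_R X (fun x => g (e x)).
Proof.
  intros He Hg x eps Heps. destruct (Hg (e x) eps Heps) as [U [HU [Ux HUy]]].
  exists (fun y => U (e y)); split; [apply He; auto | split; auto].
Qed.

Lemma cont_diff_open (X : Top) (f g : X -> R) :
  continuous_R X f -> continuous_R X g -> isopen X (fun x => f x <> g x).
Proof.
  intros Hf Hg.
  apply (open_ext X (fun x => exists W, (isopen X W /\ forall y, W y -> f y <> g y) /\ W x)).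
  - intro x; split.
    + intros [W [[_ HW] Hx]]; auto.
    + intros Hx. assert (Hd : 0 < Rabs (f x - g x) / 2).
      { assert (0 < Rabs (f x - g x)) by (apply Rabs_pos_lt; lra). lra. }
      destruct (Hf x _ Hd) as [U [HU [Ux HUy]]]. destruct (Hg x _ Hd) as [V [HV [Vx HVy]]].
      exists (fun y => U y /\ V y); split; [split; [apply open_inter; auto|] | auto].
      intros y [Uy Vy] E. specialize (HUy y Uy). specialize (HVy y Vy).
      rewrite E in HUy.
      assert (Rabs (f x - g x) <= Rabs (g y - f x) + Rabs (g y - g x)).
      { replace (f x - g x) with (-(g y - f x) + (g y - g x)) by ring.
        eapply Rle_trans; [apply Rabs_triang|]. rewrite Rabs_Ropp. lra. }
      lra.
  - apply open_union. intros W [HW _]; auto.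
Qed.

Lemma dense_agree (X : Top) (D : X -> Prop) (f g : X -> R) :
  dense X D -> continuous_R X f -> continuous_R X g ->
  (forall x, D x -> f x = g x) -> forall x, f x = g x.
Proof.
  intros HD Hf Hg H x. apply NNPP; intro Hne.
  destruct (HD _ (cont_diff_open X f g Hf Hg) (ex_intro _ x Hne)) as [y [Hy Dy]].
  apply Hy; auto.
Qed.

Lemma CX_eq (X : Top) (f g : CX X) : (forall x, proj1_sig f x = proj1_sig g x) -> f = g.
Proof.
  destruct f as [f Hf], g as [g Hg]; simpl; intros H.
  assert (f = g) by (apply functional_extensionality; auto). subst.
  f_equal. apply proof_irrelevance.
Qed.

Lemma weight_from_CX (X : Top) :
  completely_regular X -> card_le_c (CX X) -> w_le_c X.
Proof.
  intros Hcr Hc.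
  exists (CX X), (fun f x => proj1_sig f x < 1/2). split; [auto|split].
  - intros [f Hf]. simpl. apply open_lt; auto.
  - intros U x HU Ux.
    destruct (Hcr (fun y => ~ U y) x) as [f [Hf [fx [f1 f01]]]].
    + unfold isclosed. apply (open_ext X U); auto. intro y; split; [tauto|apply NNPP].
    + tauto.
    + exists (exist _ f Hf). simpl. split; [lra|].
      intros y Hy. apply NNPP; intro Hn. specialize (f1 y Hn). lra.
Qed.
Lemma list_choice (A B : Type) (Rl : A -> B -> Prop) (l : list A) :
  (forall a, In a l -> exists b, Rl a b) ->
  exists lb : list B, (forall b, In b lb -> exists a, In a l /\ Rl a b) /\
                      (forall a, In a l -> exists b, In b lb /\ Rl a b).
Proof.
  induction l as [|a l IH]; intros H.
  - exists nil; split; [intros b []| intros a []].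
  - destruct (H a (or_introl eq_refl)) as [b Hb].
    destruct IH as [lb [H1 H2]]; [intros a' Ha'; apply H; right; auto|].
    exists (b :: lb); split.
    + intros b' [<-|Hb']; [exists a; split; [left|]; auto|].
      destruct (H1 b' Hb') as [a' [? ?]]; exists a'; split; [right|]; auto.
    + intros a' [<-|Ha']; [exists b; split; [left|]; auto|].
      destruct (H2 a' Ha') as [b' [? ?]]; exists b'; split; [right|]; auto.
Qed.

Lemma list_filter_prop (A : Type) (P : A -> Prop) (l : list A) :
  exists l', (forall a, In a l' -> P a /\ In a l) /\ (forall a, In a l -> P a -> In a l').
Proof.
  induction l as [|a l [l' [H1 H2]]].
  - exists nil; split; [intros a []|intros a []].
  - destruct (classic (P a)) as [Pa|nPa].
    + exists (a :: l'); split.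
      * intros b [<-|Hb]; [split; [auto|left; auto]|]. destruct (H1 b Hb); split; [|right]; auto.
      * intros b [<-|Hb] Pb; [left; auto|right; auto].
    + exists l'; split.
      * intros b Hb. destruct (H1 b Hb); split; [|right]; auto.
      * intros b [<-|Hb] Pb; [contradiction|auto].
Qed.

(* compactness of closed subsets (closed set given by open complement W) *)
Lemma compact_closed (K : Top) (W : K -> Prop) (Fam : (K -> Prop) -> Prop) :
  Defs.compact K -> isopen K W -> (forall U, Fam U -> isopen K U) ->
  (forall x, ~ W x -> exists U, Fam U /\ U x) ->
  exists l, (forall U, In U l -> Fam U) /\ (forall x, ~ W x -> exists U, In U l /\ U x).
Proof.
  intros Hc HW HF Hcov.
  destruct (Hc (fun U => Fam U \/ U = W)) as [l [Hl1 Hl2]].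
  - intros U [HU| ->]; auto.
  - intro x. destruct (classic (W x)) as [Wx|nWx]; [exists W; auto|].
    destruct (Hcov x nWx) as [U [? ?]]; eauto.
  - destruct (list_filter_prop _ Fam l) as [l' [H1 H2]].
    exists l'; split; [intros U HU; apply H1; auto|].
    intros x nWx. destruct (Hl2 x) as [U [HUl Ux]].
    destruct (Hl1 U HUl) as [FU| ->]; [|contradiction].
    exists U; split; auto.
Qed.

Lemma cont_const (K : Top) (c : R) : continuous_R K (fun _ => c).
Proof.
  intros x eps Heps. exists (fun _ => True); split; [apply open_full|split; auto].
  intros y _. rewrite Rminus_diag, Rabs_R0. auto.
Qed.

Definition disj (K : Top) (U V : K -> Prop) := forall x, U x -> V x -> False.

Lemma sep_point_closed (K : Top) (x : K) (W : K -> Prop) :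
  Defs.compact K -> hausdorff K -> isopen K W -> W x ->
  exists U V, isopen K U /\ isopen K V /\ U x /\ (forall y, ~ W y -> V y) /\ disj K U V.
Proof.
  intros Hc Hh HW Wx.
  destruct (compact_closed K W (fun V => isopen K V /\ exists U, isopen K U /\ U x /\ disj K U V)
     Hc HW) as [l [Hl1 Hl2]].
  - intros U [? _]; auto.
  - intros y nWy. assert (Hne : y <> x) by (intro E; subst; contradiction).
    destruct (Hh y x Hne) as [V [U [HV [HU [Vy [Ux Hd]]]]]].
    exists V; split; [split; [auto|]|auto]. exists U; repeat split; auto.
    intros z Uz Vz. apply (Hd z); auto.
  - destruct (list_choice _ _ (fun V U => isopen K U /\ U x /\ disj K U V) l) as [lb [Hb1 Hb2]].
    { intros V HV. destruct (Hl1 V HV) as [_ [U HU]]. eauto. }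
    exists (fun y => forall U, In U lb -> U y), (fun y => exists V, In V l /\ V y).
    repeat split.
    + apply open_list_all. intros U HU. destruct (Hb1 U HU) as [a [_ [? _]]]; auto.
    + apply open_list_ex. intros V HV. destruct (Hl1 V HV); auto.
    + intros U HU. destruct (Hb1 U HU) as [a [_ [_ [? _]]]]; auto.
    + intros y nWy. destruct (Hl2 y nWy) as [V [? ?]]; eauto.
    + intros y HU [V [HVl Vy]]. destruct (Hb2 V HVl) as [U [HUl [_ [_ Hd]]]].
      apply (Hd y); auto.
apply HU; auto.
Qed.

Lemma normal_ch (K : Top) (W1 W2 : K -> Prop) :
  Defs.compact K -> hausdorff K -> isopen K W1 -> isopen K W2 -> (forall x, W1 x \/ W2 x) ->
  exists U1 U2, isopen K U1 /\ isopen K U2 /\ (forall y, ~ W1 y -> U1 y) /\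
     (forall y, ~ W2 y -> U2 y) /\ disj K U1 U2.
Proof.
  intros Hc Hh HW1 HW2 Hd.
  destruct (compact_closed K W1 (fun U => isopen K U /\ exists V, isopen K V /\
      (forall y, ~ W2 y -> V y) /\ disj K U V) Hc HW1) as [l [Hl1 Hl2]].
  - intros U [? _]; auto.
  - intros a nW1a. assert (W2 a) by (destruct (Hd a); tauto).
    destruct (sep_point_closed K a W2 Hc Hh HW2 H) as [U [V [HU [HV [Ua [HV2 HUV]]]]]].
    exists U; split; [split; [auto|]|auto]. exists V; auto.
  - destruct (list_choice _ _ (fun U V => isopen K V /\ (forall y, ~ W2 y -> V y) /\ disj K U V) l)
      as [lb [Hb1 Hb2]].
    { intros U HU. destruct (Hl1 U HU) as [_ [V HV]]. eauto. }
    exists (fun y => exists U, In U l /\ U y), (fun y => forall V, In V lb -> V y).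
    repeat split.
    + apply open_list_ex. intros U HU. destruct (Hl1 U HU); auto.
    + apply open_list_all. intros V HV. destruct (Hb1 V HV) as [a [_ [? _]]]; auto.
    + intros y nWy. destruct (Hl2 y nWy) as [U [? ?]]; eauto.
    + intros y nW2y V HV. destruct (Hb1 V HV) as [a [_ [_ [H _]]]]; auto.
    + intros y [U [HUl Uy]] HV. destruct (Hb2 U HUl) as [V [HVl [_ [_ Hdj]]]].
      apply (Hdj y); auto.
apply HV; auto.
Qed.

Definition ll (K : Top) (P Q : K -> Prop) :=
  exists W, isopen K W /\ (forall x, P x -> ~ W x) /\ (forall x, W x \/ Q x).

Lemma ll_sub (K : Top) P Q : ll K P Q -> forall x, P x -> Q x.
Proof. intros [W [_ [H1 H2]]] x Px. destruct (H2 x); auto. exfalso; apply (H1 x); auto. Qed.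

Lemma ll_interp (K : Top) (P Q : K -> Prop) :
  Defs.compact K -> hausdorff K -> isopen K Q -> ll K P Q ->
  exists R, isopen K R /\ ll K P R /\ ll K R Q.
Proof.
  intros Hc Hh HQ [W [HW [H1 H2]]].
  destruct (normal_ch K W Q Hc Hh HW HQ H2) as [U1 [U2 [HU1 [HU2 [HA [HB Hd]]]]]].
  exists U1; split; [auto|split].
  - exists W; split; [auto|split; [auto|]]. intro x. destruct (classic (W x)); auto.
  - exists U2; split; [auto|split].
    + intros x U1x U2x. apply (Hd x); auto.
    + intro x. destruct (classic (Q x)); auto.
Qed.
(* ---------- Urysohn lemma for compact Hausdorff spaces ---------- *)
Definition mid (K : Top) (P Q : K -> Prop) : K -> Prop :=
  epsilon (inhabits (fun _ : K => True))
    (fun R0 => isopen K R0 /\ (Defs.compact K -> hausdorff K -> isopen K Q -> ll K P Q ->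
                               ll K P R0 /\ ll K R0 Q)).

Lemma mid_spec (K : Top) (P Q : K -> Prop) :
  isopen K (mid K P Q) /\ (Defs.compact K -> hausdorff K -> isopen K Q -> ll K P Q ->
                               ll K P (mid K P Q) /\ ll K (mid K P Q) Q).
Proof.
  unfold mid. apply epsilon_spec.
  destruct (classic (Defs.compact K /\ hausdorff K /\ isopen K Q /\ ll K P Q))
    as [[H1 [H2 [H3 H4]]]|Hn].
  - destruct (ll_interp K P Q H1 H2 H3 H4) as [R0 [? [? ?]]]. exists R0; auto.
  - exists (fun _ => True); split; [apply open_full|]. intros; exfalso; tauto.
Qed.

Fixpoint Od (K : Top) (P0 U : K -> Prop) (n k : nat) : K -> Prop :=
  match n with
  | O => if Nat.eqb k 0 then P0 else U
  | S m => if Nat.even k then Od K P0 U m (Nat.div2 k)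
           else mid K (Od K P0 U m (Nat.div2 k)) (Od K P0 U m (S (Nat.div2 k)))
  end.

Definition UHyp (K : Top) (P0 U : K -> Prop) :=
  Defs.compact K /\ hausdorff K /\ isopen K P0 /\ isopen K U /\ ll K P0 U.

Lemma Od_even K P0 U n m : Od K P0 U (S n) (2 * m) = Od K P0 U n m.
Proof. cbn [Od]. rewrite Nat.even_even, Nat.div2_double. auto. Qed.

Lemma Od_odd K P0 U n m :
  Od K P0 U (S n) (2 * m + 1) = mid K (Od K P0 U n m) (Od K P0 U n (S m)).
Proof. cbn [Od]. rewrite Nat.even_odd, Nat.div2_odd'. auto. Qed.

Lemma Od_open K P0 U : UHyp K P0 U -> forall n k, isopen K (Od K P0 U n k).
Proof.
  intros [_ [_ [HP [HU _]]]]. induction n as [|n IH]; intro k; simpl.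
  - destruct (Nat.eqb k 0); auto.
  - destruct (Nat.even k); auto. apply mid_spec.
Qed.

Lemma Od_ll K P0 U : UHyp K P0 U ->
  forall n k, (k < 2 ^ n)%nat -> ll K (Od K P0 U n k) (Od K P0 U n (S k)).
Proof.
  intros H. pose proof (Od_open K P0 U H) as Hop. destruct H as [Hc [Hh [HP [HU Hl]]]].
  induction n as [|n IH]; intros k Hk.
  - simpl in Hk. assert (k = 0%nat) by lia. subst. simpl. auto.
  - destruct (Nat.Even_or_Odd k) as [[m ->]|[m ->]].
    + rewrite Od_even. replace (S (2 * m)) with (2 * m + 1)%nat by lia. rewrite Od_odd.
      simpl in Hk. assert (m < 2 ^ n)%nat by lia.
      apply (mid_spec K (Od K P0 U n m) (Od K P0 U n (S m))); auto.
    + rewrite Od_odd. replace (S (2 * m + 1)) with (2 * S m)%nat by lia. rewrite Od_even.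
      simpl in Hk. assert (m < 2 ^ n)%nat by lia.
      apply (mid_spec K (Od K P0 U n m) (Od K P0 U n (S m))); auto.
Qed.

Lemma Od_lift K P0 U : forall j n k, Od K P0 U (n + j) (k * 2 ^ j) = Od K P0 U n k.
Proof.
  induction j as [|j IH]; intros n k.
  - rewrite Nat.add_0_r, Nat.mul_1_r. auto.
  - replace (n + S j)%nat with (S (n + j)) by lia.
    replace (k * 2 ^ S j)%nat with (2 * (k * 2 ^ j))%nat by (simpl; lia).
    rewrite Od_even. apply IH.
Qed.

Lemma Od_mono K P0 U : UHyp K P0 U ->
  forall n k k', (k <= k')%nat -> (k' <= 2 ^ n)%nat ->
  forall x, Od K P0 U n k x -> Od K P0 U n k' x.
Proof.
  intros H n k k' Hkk'. induction Hkk' as [|k' Hk IH]; intros Hb x Hx; auto.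
  apply (ll_sub K _ _ (Od_ll K P0 U H n k' ltac:(lia))). apply IH; auto. lia.
Qed.

Lemma Od_cross K P0 U : UHyp K P0 U ->
  forall n k n' k', (k' <= 2 ^ n')%nat -> (k * 2 ^ n' <= k' * 2 ^ n)%nat ->
  forall x, Od K P0 U n k x -> Od K P0 U n' k' x.
Proof.
  intros H n k n' k' Hk' Hle x Hx.
  rewrite <- (Od_lift K P0 U n' n k) in Hx. rewrite <- (Od_lift K P0 U n n' k').
  replace (n' + n)%nat with (n + n')%nat by lia.
  apply (Od_mono K P0 U H (n + n') (k * 2 ^ n')); auto.
  rewrite Nat.pow_add_r. rewrite (Nat.mul_comm (2 ^ n)). apply Nat.mul_le_mono_r. auto.
Qed.

Lemma INR_pow2 n : INR (2 ^ n) = 2 ^ n.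
Proof. rewrite pow_INR. f_equal. Qed.

Lemma pow2_pos n : 0 < 2 ^ n.
Proof. apply pow_lt. lra. Qed.

Lemma dy_le k n k' n' : INR k / 2 ^ n <= INR k' / 2 ^ n' -> (k * 2 ^ n' <= k' * 2 ^ n)%nat.
Proof.
  intros H. apply INR_le. rewrite !mult_INR, !INR_pow2.
  pose proof (pow2_pos n). pose proof (pow2_pos n').
  unfold Rdiv in H.
  apply (Rmult_le_compat_r (2 ^ n * 2 ^ n')) in H; [|nra].
  replace (INR k * / 2 ^ n * (2 ^ n * 2 ^ n')) with (INR k * 2 ^ n') in H
    by (field; lra).
  replace (INR k' * / 2 ^ n' * (2 ^ n * 2 ^ n')) with (INR k' * 2 ^ n) in H
    by (field; lra).
  auto.
Qed.

Lemma dy_le1 k n : (k <= 2 ^ n)%nat -> INR k / 2 ^ n <= 1.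
Proof.
  intros H. apply le_INR in H. rewrite INR_pow2 in H. pose proof (pow2_pos n).
  apply (Rmult_le_reg_r (2 ^ n)); auto. unfold Rdiv. rewrite Rmult_assoc, Rinv_l; lra.
Qed.

Lemma dy_ge0 k n : 0 <= INR k / 2 ^ n.
Proof. pose proof (pos_INR k). pose proof (pow2_pos n). unfold Rdiv.
  apply Rmult_le_pos; auto. left; apply Rinv_0_lt_compat; auto. Qed.

Definition Sset (K : Top) (P0 U : K -> Prop) (z : K) (r : R) : Prop :=
  r = 0 \/ exists n k, (k <= 2 ^ n)%nat /\ r = INR k / 2 ^ n /\ ~ Od K P0 U n k z.

Lemma Sset_bound K P0 U z : bound (Sset K P0 U z).
Proof.
  exists 1. intros r [->|[n [k [Hk [-> _]]]]]; [lra|]. apply dy_le1; auto.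
Qed.

Lemma Sset_ne K P0 U z : exists r, Sset K P0 U z r.
Proof. exists 0. left; auto. Qed.

Definition ug (K : Top) (P0 U : K -> Prop) (z : K) : R :=
  proj1_sig (completeness _ (Sset_bound K P0 U z) (Sset_ne K P0 U z)).

Lemma ug_lub K P0 U z : is_lub (Sset K P0 U z) (ug K P0 U z).
Proof. unfold ug. destruct (completeness _ _ _) as [m Hm]. auto. Qed.

Lemma ug_range K P0 U z : 0 <= ug K P0 U z <= 1.
Proof.
  destruct (ug_lub K P0 U z) as [H1 H2]. split.
  - apply H1. left; auto.
  - apply H2. intros r [->|[n [k [Hk [-> _]]]]]; [lra|]. apply dy_le1; auto.
Qed.

Lemma ug_notin K P0 U z n k : (k <= 2 ^ n)%nat -> ~ Od K P0 U n k z ->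
  INR k / 2 ^ n <= ug K P0 U z.
Proof. intros Hk Hn. apply (ug_lub K P0 U z). right. exists n, k. auto. Qed.

Lemma ug_in K P0 U z n k : UHyp K P0 U -> Od K P0 U n k z -> ug K P0 U z <= INR k / 2 ^ n.
Proof.
  intros H Hz. apply (ug_lub K P0 U z). intros r [->|[n' [k' [Hk' [-> Hn]]]]].
  - apply dy_ge0.
  - destruct (Rle_or_lt (INR k' / 2 ^ n') (INR k / 2 ^ n)) as [Hle|Hlt]; auto.
    exfalso. apply Hn. apply (Od_cross K P0 U H n k n' k' Hk'); auto.
    apply dy_le. lra.
Qed.

Lemma floor_ex (t : R) : 0 <= t -> exists k : nat, INR k <= t < INR k + 1.
Proof.
  intros Ht.
  destruct (archimed_cor1 (/ (t + 1))) as [N [HN HN0]].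
  { apply Rinv_0_lt_compat. lra. }
  assert (HtN : t < INR N).
  { assert (0 < INR N) by (apply lt_0_INR; auto).
    destruct (Rlt_or_le t (INR N)) as [?|Hle]; auto. exfalso.
    assert (/ (t + 1) <= / INR N) by (apply Rinv_le_contravar; lra). lra. }
  clear HN HN0. induction N as [|N IH].
  - simpl in HtN. lra.
  - destruct (Rlt_or_le t (INR N)) as [H|H]; auto.
    exists N. rewrite S_INR in HtN. lra.
Qed.

Lemma INR_le_pow2 n : INR n <= 2 ^ n.
Proof.
  induction n as [|n IH]; [simpl; lra|]. rewrite S_INR.
  replace (2 ^ S n) with (2 * 2 ^ n) by (simpl; ring).
  assert (1 <= 2 ^ n) by (apply pow_R1_Rle; lra). lra.
Qed.

Lemma small_pow2 (eps : R) : 0 < eps -> exists n, 3 / 2 ^ n < eps.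
Proof.
  intros He. destruct (archimed_cor1 (eps / 3)) as [N [HN HN0]]; [lra|].
  exists N. pose proof (INR_le_pow2 N). assert (0 < INR N) by (apply lt_0_INR; auto).
  pose proof (pow2_pos N).
  assert (/ 2 ^ N <= / INR N) by (apply Rinv_le_contravar; auto).
  unfold Rdiv. lra.
Qed.

Lemma ug_cont K P0 U : UHyp K P0 U -> continuous_R K (ug K P0 U).
Proof.
  intros H z eps Heps.
  pose proof (Od_open K P0 U H) as Hop.
  destruct (small_pow2 eps Heps) as [n Hn].
  pose proof (pow2_pos n) as Hp.
  destruct (ug_range K P0 U z) as [Ht0 Ht1].
  set (t := ug K P0 U z) in *.
  destruct (floor_ex (t * 2 ^ n)) as [k0 [Hk1 Hk2]]; [apply Rmult_le_pos; lra|].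
  assert (Hkb : (k0 <= 2 ^ n)%nat).
  { apply INR_le. rewrite INR_pow2. nra. }
  assert (Hlt : t < (INR k0 + 1) / 2 ^ n).
  { apply (Rmult_lt_reg_r (2 ^ n)); auto. unfold Rdiv. rewrite Rmult_assoc, Rinv_l; lra. }
  assert (Hge : INR k0 / 2 ^ n <= t).
  { apply (Rmult_le_reg_r (2 ^ n)); auto. unfold Rdiv. rewrite Rmult_assoc, Rinv_l; lra. }
  assert (HN1 : exists N1, isopen K N1 /\ N1 z /\ forall w, N1 w -> ug K P0 U w < t + 3 / 2 ^ n).
  { destruct (Nat.le_gt_cases (S k0) (2 ^ n)) as [Hs|Hs].
    - exists (Od K P0 U n (S k0)). split; [auto|split].
      + apply NNPP; intro Hno. pose proof (ug_notin K P0 U z n (S k0) Hs Hno).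
        rewrite S_INR in H0. fold t in H0. lra.
      + intros w Hw. pose proof (ug_in K P0 U w n (S k0) H Hw). rewrite S_INR in H0.
        assert (3 / 2 ^ n > 1 / 2 ^ n) by (unfold Rdiv; apply Rmult_lt_compat_r;
           [apply Rinv_0_lt_compat|]; lra).
        unfold Rdiv in *. lra.
    - exists (fun _ => True). split; [apply open_full|split; auto].
      intros w _. destruct (ug_range K P0 U w).
      assert (INR k0 >= 2 ^ n) by (rewrite <- INR_pow2; apply Rle_ge, le_INR; lia).
      assert (1 <= t) by (apply (Rmult_le_reg_r (2 ^ n)); lra).
      assert (0 < 3 / 2 ^ n) by (unfold Rdiv; apply Rmult_lt_0_compat; [lra|apply Rinv_0_lt_compat; lra]).
      lra. }
  assert (HN2 : exists N2, isopen K N2 /\ N2 z /\ forall w, N2 w -> t - 3 / 2 ^ n < ug K P0 U w).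
  { destruct k0 as [|[|k]].
    - exists (fun _ => True). split; [apply open_full|split; auto].
      intros w _. destruct (ug_range K P0 U w). simpl in Hlt.
      assert (1 / 2 ^ n < 3 / 2 ^ n) by (unfold Rdiv; apply Rmult_lt_compat_r;
           [apply Rinv_0_lt_compat|]; lra). unfold Rdiv in *. lra.
    - exists (fun _ => True). split; [apply open_full|split; auto].
      intros w _. destruct (ug_range K P0 U w). simpl in Hlt.
      assert (2 / 2 ^ n < 3 / 2 ^ n) by (unfold Rdiv; apply Rmult_lt_compat_r;
           [apply Rinv_0_lt_compat|]; lra). unfold Rdiv in *. lra.
    - destruct (Od_ll K P0 U H n k ltac:(lia)) as [W [HW [HW1 HW2]]].
      exists W. split; [auto|split].
      + destruct (HW2 z) as [Wz|Oz]; auto. exfalso.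
        pose proof (ug_in K P0 U z n (S k) H Oz). fold t in H0.
        repeat rewrite S_INR in Hge. repeat rewrite S_INR in H0. unfold Rdiv in *.
        assert (/ 2 ^ n > 0) by (apply Rinv_0_lt_compat; lra).
        rewrite !Rmult_plus_distr_r in Hge, H0. lra.
      + intros w Ww. pose proof (ug_notin K P0 U w n k ltac:(lia) (fun Ho => HW1 w Ho Ww)).
        repeat rewrite S_INR in Hlt. unfold Rdiv in *.
        rewrite !Rmult_plus_distr_r in Hlt. lra. }
  destruct HN1 as [N1 [HN1o [HN1z HN1w]]]. destruct HN2 as [N2 [HN2o [HN2z HN2w]]].
  exists (fun w => N1 w /\ N2 w). split; [apply open_inter; auto|split; auto].
  intros w [H1 H2]. specialize (HN1w w H1). specialize (HN2w w H2).
  apply Rabs_def1; fold t; lra.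
Qed.

Lemma urysohn (K : Top) (z : K) (V : K -> Prop) :
  Defs.compact K -> hausdorff K -> isopen K V -> V z ->
  exists g : K -> R, continuous_R K g /\ g z = 0 /\ forall w, ~ V w -> g w = 1.
Proof.
  intros Hc Hh HV Vz.
  assert (Hsing : isopen K (fun y => y <> z)).
  { apply (open_ext K (fun y => exists W, (isopen K W /\ ~ W z) /\ W y)).
    - intro y; split.
      + intros [W [[_ Hn] Wy]] E; subst; auto.
      + intros Hne. destruct (Hh y z Hne) as [A [B [HA [HB [Ay [Bz Hd]]]]]].
        exists A; split; [split; auto|auto]. intro Az. apply (Hd z); auto.
    - apply open_union. intros W [? _]; auto. }
  destruct (normal_ch K (fun y => y <> z) V Hc Hh Hsing HV) as [U1 [U2 [HU1 [HU2 [H1 [H2 Hd]]]]]].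
  { intro x. destruct (classic (x = z)) as [->|]; auto. }
  assert (Hll : ll K U1 V).
  { exists U2; split; [auto|split].
    - intros x U1x U2x. apply (Hd x); auto.
    - intro x. destruct (classic (V x)); auto. }
  assert (HU : UHyp K U1 V) by (repeat split; auto).
  exists (ug K U1 V). split; [apply ug_cont; auto|split].
  - assert (U1 z) by (apply H1; tauto).
    pose proof (ug_in K U1 V z 0 0 HU H). simpl in H0. destruct (ug_range K U1 V z). lra.
  - intros w nVw. pose proof (ug_notin K U1 V w 0 1 ltac:(simpl; lia) nVw). simpl in H.
    destruct (ug_range K U1 V w). lra.
Qed.
Definition extK (X K : Top) (e : X -> K) (f : CX X) : K -> R :=
  epsilon (inhabits (fun _ : K => 0))
    (fun g => continuous_R K g /\
       ((exists h, continuous_R K h /\ forall x, h (e x) = proj1_sig f x) ->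
        forall x, g (e x) = proj1_sig f x)).

Lemma extK_spec (X K : Top) (e : X -> K) (f : CX X) :
  continuous_R K (extK X K e f) /\
       ((exists h, continuous_R K h /\ forall x, h (e x) = proj1_sig f x) ->
        forall x, extK X K e f (e x) = proj1_sig f x).
Proof.
  unfold extK. apply epsilon_spec.
  destruct (classic (exists h, continuous_R K h /\ forall x, h (e x) = proj1_sig f x))
    as [[h [Hh1 Hh2]]|Hn].
  - exists h; split; auto.
  - exists (fun _ => 0); split; [apply cont_const|]. intros; contradiction.
Qed.

Lemma weight_compactification (X K : Top) (e : X -> K) :
  compactification X K e -> card_le_c (CX X) -> w_le_c K.
Proof.
  intros [Hc [Hh [[He _] Hd]]] HC.
  exists (CX X), (fun f w => extK X K e f w < 1/2). split; [auto|split].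
  - intro f. apply open_lt. apply extK_spec.
  - intros V z HV Vz.
    destruct (urysohn K z V Hc Hh HV Vz) as [g [Hg [gz g1]]].
    set (f := exist (fun h => continuous_R X h) (fun x => g (e x)) (cont_comp X K e g He Hg)).
    assert (Heq : forall w, extK X K e f w = g w).
    { apply (dense_agree K (fun w => exists x, e x = w)); auto.
      - apply extK_spec.
      - intros w [x <-]. destruct (extK_spec X K e f) as [_ H2].
        rewrite H2; [auto|]. exists g; split; auto. }
    exists f. rewrite Heq. split; [lra|].
    intros w Hw. rewrite Heq in Hw. apply NNPP; intro nV. rewrite (g1 w nV) in Hw. lra.
Qed.
Definition Pij (X : Top) (I : Type) (N : I -> X -> Prop) (i j : I) (g : X -> R) :=
  continuous_R X g /\ (forall a, N i a -> g a < 1/3) /\ (forall b, N j b -> 2/3 < g b).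

Definition phi (X : Top) (I : Type) (N : I -> X -> Prop) (ij : I * I) : X -> R :=
  epsilon (inhabits (fun _ : X => 0))
   (fun g => continuous_R X g /\ ((exists h, Pij X I N (fst ij) (snd ij) h) ->
                                   Pij X I N (fst ij) (snd ij) g)).

Lemma phi_spec X I N ij : continuous_R X (phi X I N ij) /\
  ((exists h, Pij X I N (fst ij) (snd ij) h) -> Pij X I N (fst ij) (snd ij) (phi X I N ij)).
Proof.
  unfold phi. apply epsilon_spec.
  destruct (classic (exists h, Pij X I N (fst ij) (snd ij) h)) as [[h Hh]|Hn].
  - exists h. split; [apply Hh|auto].
  - exists (fun _ => 0). split; [apply cont_const|]. intros; contradiction.
Qed.

Lemma phi_sep (X : Top) (I : Type) (N : I -> X -> Prop) :
  tychonoff X ->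
  (forall U x, isopen X U -> U x -> exists i, N i x /\ forall y, N i y -> U y) ->
  forall x p : X, x <> p -> exists ij, phi X I N ij x < 1/3 /\ 2/3 < phi X I N ij p.
Proof.
  intros [HT1 Hcr] HN x p Hxp.
  destruct (Hcr (fun y => y = p) x) as [h [Hh [hx [hp h01]]]].
  - unfold isclosed. apply (open_ext X (fun y => exists W, (isopen X W /\ ~ W p) /\ W y)).
    + intro y; split.
      * intros [W [[_ Hn] Wy]] E; subst; auto.
      * intros Hne. destruct (HT1 y p Hne) as [U [HU [Uy nUp]]]. exists U; auto.
    + apply open_union. intros W [? _]; auto.
  - auto.
  - destruct (HN (fun y => h y < 1/3) x (open_lt X h _ Hh)) as [i [Ni Hi]]; [lra|].
    destruct (HN (fun y => 2/3 < h y) p (open_gt X h _ Hh)) as [j [Nj Hj]].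
    { rewrite (hp p eq_refl). lra. }
    assert (HP : Pij X I N i j h) by (split; [auto|split; auto]).
    destruct (phi_spec X I N (i, j)) as [_ H2]. specialize (H2 (ex_intro _ h HP)).
    destruct H2 as [_ [H3 H4]]. exists (i, j). split; [apply H3|apply H4]; auto.
Qed.

Definition inB (X : Top) (I : Type) (N : I -> X -> Prop) (l : list (I * I)) (x : X) := forall ij, In ij l -> phi X I N ij x < 1/2.
Definition inBbar (X : Top) (I : Type) (N : I -> X -> Prop) (l : list (I * I)) (x : X) := forall ij, In ij l -> phi X I N ij x <= 1/2.
Definition inU (X : Top) (I : Type) (N : I -> X -> Prop) (Lst : list (list (I * I))) (x : X) := exists l, In l Lst /\ inB X I N l x.
Definition inUbar (X : Top) (I : Type) (N : I -> X -> Prop) (Lst : list (list (I * I))) (x : X) :=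
  exists l, In l Lst /\ inBbar X I N l x.

Lemma inB_open X I N l : isopen X (inB X I N l).
Proof. unfold inB. apply open_list_all. intros ij _. apply open_lt. exact (proj1 (phi_spec _ _ _ _)). Qed.

Lemma inU_open X I N Lst : isopen X (inU X I N Lst).
Proof. unfold inU. apply open_list_ex. intros l _. apply inB_open. Qed.

Lemma not_inUbar_open X I N Lst : isopen X (fun x => ~ inUbar X I N Lst x).
Proof.
  apply (open_ext X (fun x => forall l, In l Lst -> exists ij, In ij l /\ 1/2 < phi X I N ij x)).
  - intro x; split.
    + intros H [l [Hl Hb]]. destruct (H l Hl) as [ij [Hij Hp]]. specialize (Hb ij Hij). lra.
    + intros H l Hl. apply NNPP; intro Hn. apply H. exists l; split; auto.
      intros ij Hij. apply Rnot_lt_le. intro Hlt. apply Hn. eauto.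
  - apply open_list_all. intros l _. apply open_list_ex. intros ij _. apply open_gt.
    exact (proj1 (phi_spec _ _ _ _)).
Qed.

Definition Ly (X : Top) (D : X -> Prop) (L : Top) (e : subspace X D -> L)
  (I2 : Type) (F : I2 -> L -> Prop) (y : subspace X D) (z : L) :=
  forall n, F n (e y) -> F n z.

Lemma emb_open (X : Top) (D : X -> Prop) (L : Top) (e : subspace X D -> L) :
  embedding (subspace X D) L e -> forall O, isopen X O ->
  exists V, isopen L V /\ forall q : subspace X D, O (proj1_sig q) <-> V (e q).
Proof.
  intros [_ [_ H]] O HO. destruct (H (fun q : subspace X D => O (proj1_sig q))) as [V [HV HV2]].
  - exists O; split; [auto|]. intro y; tauto.
  - exists V; split; auto.
Qed.

Lemma Ly_in (X : Top) (D : X -> Prop) (L : Top) (e : subspace X D -> L)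
  (I2 : Type) (F : I2 -> L -> Prop) :
  (forall (y : subspace X D) (z : L), ~ (exists y', e y' = z) -> exists i, F i (e y) /\ ~ F i z) ->
  forall y z, Ly X D L e I2 F y z -> exists p, e p = z.
Proof.
  intros Hn y z Hz. apply NNPP; intro H. destruct (Hn y z H) as [i [H1 H2]]. apply H2; auto.
Qed.

Lemma get_s (X : Top) (D : X -> Prop) (L : Top) (e : subspace X D -> L)
  (I2 : Type) (F : I2 -> L -> Prop) :
  Defs.compact L -> embedding (subspace X D) L e -> (forall i, isclosed L (F i)) ->
  (forall (y : subspace X D) (z : L), ~ (exists y', e y' = z) -> exists i, F i (e y) /\ ~ F i z) ->
  forall y (O : X -> Prop), isopen X O ->
  (forall p, Ly X D L e I2 F y (e p) -> O (proj1_sig p)) ->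
  exists s : list I2, (forall n, In n s -> F n (e y)) /\
     forall x, (forall n, In n s -> F n (e x)) -> O (proj1_sig x).
Proof.
  intros Hc Hemb HF Hnag y O HO Hcov.
  destruct (emb_open X D L e Hemb O HO) as [VO [HVO EVO]].
  destruct (Hc (fun V => (exists n, F n (e y) /\ V = fun z => ~ F n z) \/ V = VO)) as [l [Hl1 Hl2]].
  - intros V [[n [_ ->]]| ->]; auto. apply HF.
  - intro z. destruct (classic (exists n, F n (e y) /\ ~ F n z)) as [[n [H1 H2]]|Hn].
    + exists (fun z => ~ F n z). split; [left; eauto|auto].
    + assert (HLy : Ly X D L e I2 F y z).
      { intros n Hn1. apply NNPP; intro. apply Hn; eauto. }
      destruct (Ly_in X D L e I2 F Hnag y z HLy) as [p <-].
      exists VO. split; [right; auto|]. apply EVO. apply Hcov; auto.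
  - destruct (list_filter_prop _ (fun V => exists n, F n (e y) /\ V = fun z => ~ F n z) l)
      as [l' [H1 H2]].
    destruct (list_choice _ _ (fun V n => F n (e y) /\ V = fun z => ~ F n z) l') as [s [Hs1 Hs2]].
    { intros V HV. apply H1; auto. }
    exists s. split.
    + intros n Hn. destruct (Hs1 n Hn) as [V [_ [? _]]]; auto.
    + intros x Hx. destruct (Hl2 (e x)) as [V [HVl HVx]].
      destruct (Hl1 V HVl) as [Hk| ->].
      * exfalso. destruct (Hs2 V (H2 V HVl Hk)) as [n [Hns [_ ->]]]. apply HVx. auto.
      * apply EVO; auto.
Qed.

Lemma cpt_D (X : Top) (D : X -> Prop) (L : Top) (e : subspace X D -> L)
  (I2 : Type) (F : I2 -> L -> Prop) :
  Defs.compact L -> embedding (subspace X D) L e -> (forall i, isclosed L (F i)) ->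
  (forall (y : subspace X D) (z : L), ~ (exists y', e y' = z) -> exists i, F i (e y) /\ ~ F i z) ->
  forall y (O : X -> Prop) (Fam : (X -> Prop) -> Prop), isopen X O ->
  (forall U, Fam U -> isopen X U) ->
  (forall p, Ly X D L e I2 F y (e p) -> ~ O (proj1_sig p) -> exists U, Fam U /\ U (proj1_sig p)) ->
  exists l, (forall U, In U l -> Fam U) /\
    forall p, Ly X D L e I2 F y (e p) -> ~ O (proj1_sig p) -> exists U, In U l /\ U (proj1_sig p).
Proof.
  intros Hc Hemb HF Hnag y O Fam HO HFam Hcov.
  destruct (emb_open X D L e Hemb O HO) as [VO [HVO EVO]].
  set (R2 := fun V U => Fam U /\ isopen L V /\ forall q : subspace X D, U (proj1_sig q) <-> V (e q)).
  destruct (Hc (fun V => (exists n, F n (e y) /\ V = fun z => ~ F n z) \/ V = VO \/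
                          exists U, R2 V U)) as [l [Hl1 Hl2]].
  - intros V [[n [_ ->]]|[ -> |[U [_ [? _]]]]]; auto. apply HF.
  - intro z. destruct (classic (exists n, F n (e y) /\ ~ F n z)) as [[n [H1 H2]]|Hn].
    + exists (fun z => ~ F n z). split; [left; eauto|auto].
    + assert (HLy : Ly X D L e I2 F y z).
      { intros n Hn1. apply NNPP; intro. apply Hn; eauto. }
      destruct (Ly_in X D L e I2 F Hnag y z HLy) as [p <-].
      destruct (classic (O (proj1_sig p))) as [Op|nOp].
      * exists VO. split; [right; left; auto|]. apply EVO; auto.
      * destruct (Hcov p HLy nOp) as [U [FU Up]].
        destruct (emb_open X D L e Hemb U (HFam U FU)) as [V [HV EV]].
        exists V. split; [right; right; exists U; split; auto|]. apply EV; auto.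
  - destruct (list_filter_prop _ (fun V => exists U, R2 V U) l) as [l' [H1 H2]].
    destruct (list_choice _ _ R2 l') as [lb [Hb1 Hb2]].
    { intros V HV. apply H1; auto. }
    exists lb. split.
    + intros U HU. destruct (Hb1 U HU) as [V [_ [? _]]]; auto.
    + intros p HLy nOp. destruct (Hl2 (e p)) as [V [HVl HVx]].
      destruct (Hl1 V HVl) as [[n [Hn ->]]|[ -> |Hk]].
      * exfalso. apply HVx. apply HLy; auto.
      * exfalso. apply nOp. apply EVO; auto.
      * destruct (Hb2 V (H2 V HVl Hk)) as [U [HUl [_ [_ EU]]]].
        exists U. split; auto. apply EU; auto.
Qed.
Definition Valid (X : Top) (I : Type) (N : I -> X -> Prop) (D : X -> Prop) (L : Top)
  (e : subspace X D -> L) (I2 : Type) (F : I2 -> L -> Prop) (f : X -> R) (s : list I2)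
  (a b a' b' : R) (Lst : list (list (I * I))) :=
  forall x : subspace X D, (forall n, In n s -> F n (e x)) ->
    (a <= f (proj1_sig x) <= b -> inU X I N Lst (proj1_sig x)) /\
    (inU X I N Lst (proj1_sig x) -> a' < f (proj1_sig x) < b').

Lemma local_lemma (X : Top) (I : Type) (N : I -> X -> Prop) (D : X -> Prop) (L : Top)
  (e : subspace X D -> L) (I2 : Type) (F : I2 -> L -> Prop) :
  tychonoff X ->
  (forall U x, isopen X U -> U x -> exists i, N i x /\ forall y, N i y -> U y) ->
  Defs.compact L -> embedding (subspace X D) L e -> (forall i, isclosed L (F i)) ->
  (forall (y : subspace X D) (z : L), ~ (exists y', e y' = z) -> exists i, F i (e y) /\ ~ F i z) ->
  forall f, continuous_R X f -> forall y a b a' b', a' < a -> b < b' ->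
  a <= f (proj1_sig y) <= b ->
  exists s, (forall n, In n s -> F n (e y)) /\ exists Lst, Valid X I N D L e I2 F f s a b a' b' Lst.
Proof.
  intros Hty HN Hc Hemb HF Hnag f Hf y a b a' b' Ha Hb Hy.
  set (P := Ly X D L e I2 F y).
  assert (HO1 : isopen X (fun x => a' < f x < b')).
  { apply open_inter; [apply open_gt|apply open_lt]; auto. }
  set (Sepl := fun l => forall r : subspace X D, P (e r) -> ~ (a' < f (proj1_sig r) < b') ->
                ~ inBbar X I N l (proj1_sig r)).
  assert (Hstb : forall q : subspace X D, P (e q) -> a <= f (proj1_sig q) <= b ->
     exists l, inB X I N l (proj1_sig q) /\ Sepl l).
  { intros q Hq Hfq.
    destruct (cpt_D X D L e I2 F Hc Hemb HF Hnag y (fun x => a' < f x < b')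
      (fun U => exists ij, phi X I N ij (proj1_sig q) < 1/2 /\ U = fun x => 1/2 < phi X I N ij x)
      HO1) as [lU [H1 H2]].
    - intros U [ij [_ ->]]. apply open_gt. exact (proj1 (phi_spec _ _ _ _)).
    - intros r Hr nO. assert (Hne : proj1_sig q <> proj1_sig r).
      { intro E. apply nO. rewrite <- E. lra. }
      destruct (phi_sep X I N Hty HN _ _ Hne) as [ij [H1 H2]].
      exists (fun x => 1/2 < phi X I N ij x). split; [|lra]. exists ij; split; [lra|auto].
    - destruct (list_choice _ _ (fun U ij => phi X I N ij (proj1_sig q) < 1/2 /\
           U = fun x => 1/2 < phi X I N ij x) lU) as [lp [Hp1 Hp2]].
      { intros U HU. apply H1; auto. }
      exists lp. split.
      + intros ij Hij. destruct (Hp1 ij Hij) as [U [_ [? _]]]; auto.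
      + intros r Hr nO Hbar. destruct (H2 r Hr nO) as [U [HUl HUr]].
        destruct (Hp2 U HUl) as [ij [Hij [_ EU]]]. subst U.
        specialize (Hbar ij Hij). simpl in HUr. lra. }
  assert (HO2 : isopen X (fun x => f x < a \/ b < f x)).
  { apply open_or; [apply open_lt|apply open_gt]; auto. }
  destruct (cpt_D X D L e I2 F Hc Hemb HF Hnag y (fun x => f x < a \/ b < f x)
      (fun U => exists l, Sepl l /\ U = inB X I N l) HO2) as [lU2 [H1 H2]].
  { intros U [l [_ ->]]. apply inB_open. }
  { intros q Hq nO. destruct (Hstb q Hq) as [l [Hl1 Hl2]].
    - split; apply Rnot_lt_le; intro; apply nO; auto.
    - exists (inB X I N l). split; [exists l; auto|auto]. }
  destruct (list_choice _ _ (fun U l => Sepl l /\ U = inB X I N l) lU2) as [Lst [HL1 HL2]].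
  { intros U HU. apply H1; auto. }
  assert (HQ : forall q : subspace X D, P (e q) -> a <= f (proj1_sig q) <= b ->
                 inU X I N Lst (proj1_sig q)).
  { intros q Hq Hfq. destruct (H2 q Hq) as [U [HUl HUq]].
    - intros [?|?]; lra.
    - destruct (HL2 U HUl) as [l [Hl [_ ->]]]. exists l; auto. }
  assert (HS : forall l, In l Lst -> Sepl l).
  { intros l Hl. destruct (HL1 l Hl) as [U [_ [? _]]]; auto. }
  set (Wx := fun x => ((f x < a \/ b < f x) \/ inU X I N Lst x) /\
                      (~ inUbar X I N Lst x \/ (a' < f x < b'))).
  assert (HW : isopen X Wx).
  { apply open_inter; apply open_or; auto.
    - apply inU_open.
    - apply not_inUbar_open. }
  destruct (get_s X D L e I2 F Hc Hemb HF Hnag y Wx HW) as [s [Hs1 Hs2]].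
  { intros p Hp. unfold Wx.
    destruct (classic (a <= f (proj1_sig p) <= b)) as [Hab|Hab].
    - split; [right; apply HQ; auto|right; lra].
    - split; [left; apply NNPP; intro Hn; apply Hab; split; apply Rnot_lt_le; intro; apply Hn; auto|].
      destruct (classic (a' < f (proj1_sig p) < b')) as [?|Hn]; [right; auto|left].
      intros [l [Hl Hbar]]. apply (HS l Hl p Hp Hn Hbar). }
  exists s. split; [auto|]. exists Lst. intros x Hx. destruct (Hs2 x Hx) as [W1 W2]. split.
  - intros Hfx. destruct W1 as [[?|?]|?]; auto; lra.
  - intros [l [Hl HB]]. destruct W2 as [W2|W2]; auto. exfalso. apply W2.
    exists l. split; auto. intros ij Hij. specialize (HB ij Hij). lra.
Qed.
Definition dl (m : nat) : R := / (INR m + 1).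

Definition VV (X : Top) (I : Type) (N : I -> X -> Prop) (D : X -> Prop) (L : Top)
  (e : subspace X D -> L) (I2 : Type) (F : I2 -> L -> Prop) (f : CX X)
  (p : list I2 * (Z * nat)) (Lst : list (list (I * I))) : Prop :=
  let z := fst (snd p) in let m := snd (snd p) in
  Valid X I N D L e I2 F (proj1_sig f) (fst p) (IZR z * dl m) ((IZR z + 1) * dl m)
    ((IZR z - 1) * dl m) ((IZR z + 2) * dl m) Lst.

Definition code (X : Top) (I : Type) (N : I -> X -> Prop) (D : X -> Prop) (L : Top)
  (e : subspace X D -> L) (I2 : Type) (F : I2 -> L -> Prop) (f : CX X)
  (p : list I2 * (Z * nat)) : option (list (list (I * I))) :=
  match excluded_middle_informative (exists Lst, VV X I N D L e I2 F f p Lst) with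
  | left H => Some (proj1_sig (constructive_indefinite_description _ H))
  | right _ => None
  end.

Lemma code_spec X I N D L e I2 F f p Lst :
  code X I N D L e I2 F f p = Some Lst -> VV X I N D L e I2 F f p Lst.
Proof.
  unfold code. destruct (excluded_middle_informative _) as [H|H]; [|discriminate].
  destruct (constructive_indefinite_description _ H) as [L1 HL1]. simpl. intro E.
  inversion E. subst. auto.
Qed.

Lemma code_some X I N D L e I2 F f p :
  (exists Lst, VV X I N D L e I2 F f p Lst) -> exists L1, code X I N D L e I2 F f p = Some L1.
Proof.
  intros H. unfold code. destruct (excluded_middle_informative _) as [H'|H']; [eauto|contradiction].
Qed.

Lemma close_eq (u v : R) : (forall eps, 0 < eps -> Rabs (u - v) < eps) -> u = v.
Proof.
  intros H. apply NNPP; intro Hne.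
  assert (0 < Rabs (u - v)) by (apply Rabs_pos_lt; lra).
  specialize (H _ H0). lra.
Qed.

Lemma card_CX (X : Top) :
  tychonoff X -> nw_le_c X ->
  (exists D : X -> Prop, dense X D /\ lindelof_sigma (subspace X D)) -> card_le_c (CX X).
Proof.
  intros Hty [I [N [HI HN]]] [D [HD [L [e [[[Hc [Hh [Hemb Hdn]]] _] [I2 [F [HI2 [HF Hnag]]]]]]]]].
  apply (card_inj _ _ (code X I N D L e I2 F)).
  - intros f g Hfg. apply CX_eq.
    apply (dense_agree X D); auto; [destruct f; auto|destruct g; auto|].
    intros x Dx. set (y := exist D x Dx : subspace X D).
    apply eq_sym, close_eq. intros eps Heps.
    destruct (archimed_cor1 (eps / 3)) as [Nn [HNn HNn0]]; [lra|].
    set (m := pred Nn).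
    assert (Hm : INR m + 1 = INR Nn).
    { unfold m. destruct Nn; [lia|]. rewrite S_INR. simpl. auto. }
    assert (Hd : 0 < dl m) by (unfold dl; apply Rinv_0_lt_compat; pose proof (pos_INR m); lra).
    assert (Hd3 : 3 * dl m < eps) by (unfold dl; rewrite Hm; lra).
    set (v := proj1_sig f x / dl m).
    set (z := (up v - 1)%Z).
    destruct (archimed v) as [Hv1 Hv2].
    assert (Hz : IZR z = IZR (up v) - 1) by (unfold z; rewrite minus_IZR; auto).
    assert (Hfx : proj1_sig f x = v * dl m) by (unfold v; field; lra).
    assert (Hab : IZR z * dl m <= proj1_sig f (proj1_sig y) <= (IZR z + 1) * dl m).
    { simpl. rewrite Hfx. split; apply Rmult_le_compat_r; lra. }
    destruct (local_lemma X I N D L e I2 F Hty HN Hc Hemb HF Hnag (proj1_sig f) (proj2_sig f)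
        y (IZR z * dl m) ((IZR z + 1) * dl m) ((IZR z - 1) * dl m) ((IZR z + 2) * dl m))
      as [s [Hs [Lst HLst]]]; [nra|nra|auto|].
    destruct (code_some X I N D L e I2 F f (s, (z, m))) as [L1 HL1]; [exists Lst; auto|].
    pose proof (code_spec X I N D L e I2 F f _ _ HL1) as Vf.
    rewrite Hfg in HL1. pose proof (code_spec X I N D L e I2 F g _ _ HL1) as Vg.
    unfold VV in Vf, Vg; simpl in Vf, Vg.
    destruct (Vf y Hs) as [Vf1 _]. destruct (Vg y Hs) as [_ Vg2].
    specialize (Vg2 (Vf1 Hab)). simpl in Vg2, Hab.
    apply Rabs_def1; nra.
  - apply card_fun.
    + apply countable_prod; [apply countable_list; auto|].
      apply countable_prod; [apply countable_Z|apply countable_nat].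
    + apply card_option. apply card_list. apply card_list. apply card_prod; auto.
Qed.

Theorem corollary2 (X : Top) :
  tychonoff X -> nw_le_c X ->
  (exists D : X -> Prop, dense X D /\ lindelof_sigma (subspace X D)) ->
  card_le_c (CX X) /\ w_le_c X /\
  (forall (K : Top) (e : X -> K), stone_cech X K e -> w_le_c K).
Proof.
  intros Hty Hnw HD.
  assert (HC : card_le_c (CX X)) by (apply card_CX; auto).
  split; [auto|split].
  - apply weight_from_CX; [apply Hty|auto].
  - intros K e [Hcomp _]. apply (weight_compactification X K e); auto.
Qed.
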